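(* Let $t$ be a positive integer and let $M$ be a matroid with the $(t,2t)$-property. Let $C_1^*,C_2^*,\dotsc,C_{t-1}^*$ be pairwise disjoint cocircuits of $M$, and let $Y = E(M)-\bigcup_{i \in \{1,\dots,t-1\}} C_i^*$. Then for every $y \in Y$ there is a $2t$-element circuit $C_y$ of $M$ containing $y$ such that either (i) $|C_y \cap C_i^*| = 2$ for all $i \in \{1,\dots,t-1\}$, or (ii) $|C_y \cap C_j^*| = 3$ for some $j \in \{1,\dots,t-1\}$, and $|C_y \cap C_i^*| = 2$ for all $i \in \{1,\dots,t-1\}-\{j\}$. Moreover, if $C_y = S \cup \{y\}$ (with $y\notin S$) satisfies (ii), then there are at most $3t-1$ elements $w \in Y$ such that $S \cup \{w\}$ is a circuit of $M$.
   Context: A matroid $M$ has the $(t,2t)$-property if every $t$-element subset of $E(M)$ is contained in both a $2t$-element circuit and a $2t$-element cocircuit of $M$. *)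

(* Defs.v *)
From mathcomp Require Import all_boot.
Set Implicit Arguments. Unset Strict Implicit. Unset Printing Implicit Defensive.

(* A matroid whose ground set E(M) is the whole finite type T,
   given by its independent sets. *)
Record matroid (T : finType) := Matroid {
  indep : {set T} -> bool;
  indep0 : indep set0;
  indep_subset : forall A B : {set T}, B \subset A -> indep A -> indep B;
  indep_aug : forall A B : {set T}, indep A -> indep B -> #|A| < #|B| ->
     exists2 x, x \in B :\: A & indep (x |: A)
}.

Section MatroidDefs.
Variables (T : finType) (M : matroid T).

Definition is_circuit (C : {set T}) : bool :=
  ~~ indep M C && [forall D : {set T}, (D \proper C) ==> indep M D].

Definition is_basis (B : {set T}) : Prop :=
  indep M B /\ forall X : {set T}, indep M X -> B \subset X -> X = B.

Definition dual_indep (X : {set T}) : Prop :=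
  exists B : {set T}, is_basis B /\ X \subset ~: B.

Definition is_cocircuit (C : {set T}) : Prop :=
  ~ dual_indep C /\ forall D : {set T}, D \proper C -> dual_indep D.

Definition t2t_property (t : nat) : Prop :=
  forall X : {set T}, #|X| = t ->
    (exists C : {set T}, [/\ is_circuit C, #|C| = 2 * t & X \subset C]) /\
    (exists D : {set T}, [/\ is_cocircuit D, #|D| = 2 * t & X \subset D]).

End MatroidDefs.

(* Main.v *)
Require Import Defs.
From mathcomp Require Import all_boot zify.
Set Implicit Arguments. Unset Strict Implicit. Unset Printing Implicit Defensive.

Section Rank.
Variables (T : finType) (M : matroid T).

Definition indep_in (A : {set T}) := [pred K : {set T} | (K \subset A) && indep M K].
Definition rk (A : {set T}) := \max_(K in indep_in A) #|K|.

Lemma rk_ge (A I : {set T}) : I \subset A -> indep M I -> #|I| <= rk A.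
Proof. by move=> sIA iI; apply: (leq_bigmax_cond I); rewrite inE sIA iI. Qed.

Lemma rk_wit (A : {set T}) : exists I : {set T}, [/\ I \subset A, indep M I & #|I| = rk A].
Proof.
have: 0 < #|indep_in A|.
  by apply/card_gt0P; exists set0; rewrite inE sub0set indep0.
case/(eq_bigmax_cond (fun K : {set T} => #|K|)) => I; rewrite inE => /andP[s i] e.
by exists I; split.
Qed.

Lemma rk_mono (A B : {set T}) : A \subset B -> rk A <= rk B.
Proof.
move=> sAB; have [I [sIA iI <-]] := rk_wit A.
by apply: rk_ge => //; apply: subset_trans sAB.
Qed.

Lemma rk_max (A I : {set T}) : I \subset A -> indep M I ->
  (forall x, x \in A -> x \notin I -> ~~ indep M (x |: I)) -> #|I| = rk A.
Proof.
move=> sIA iI hmax; apply/eqP; rewrite eqn_leq rk_ge //=.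
have [J [sJA iJ eJ]] := rk_wit A; rewrite -eJ leqNgt; apply/negP => lt.
have [x /setDP[xJ xI] ix] := indep_aug iI iJ lt.
by move: (hmax x (subsetP sJA x xJ) xI); rewrite ix.
Qed.

Lemma rk_extend (A : {set T}) : forall n (I : {set T}), rk A - #|I| <= n -> I \subset A -> indep M I ->
  exists J : {set T}, [/\ I \subset J, J \subset A, indep M J & #|J| = rk A].
Proof.
elim=> [|n IH] I hn sIA iI.
  exists I; split => //; apply/eqP; rewrite eqn_leq rk_ge //=.
  by rewrite -subn_eq0 -leqn0.
have [le|lt] := leqP (rk A) #|I|.
  by exists I; split => //; apply/eqP; rewrite eqn_leq rk_ge //=.
have [J [sJA iJ eJ]] := rk_wit A.
have [x /setDP[xJ xI] ix] := indep_aug iI iJ ltac:(by rewrite eJ).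
have h1 : rk A - #|x |: I| <= n.
  rewrite cardsU1 xI; move: hn; rewrite add1n subnS; lia.
have h2 : x |: I \subset A by rewrite subUset sIA sub1set (subsetP sJA).
have [K [s1 s2 s3 s4]] := IH (x |: I) h1 h2 ix.
by exists K; split => //; apply: subset_trans s1; apply: subsetUr.
Qed.

Lemma basis_rk (B : {set T}) : is_basis M B -> #|B| = rk setT.
Proof.
case=> iB mB; apply: rk_max => // x _ xB; apply/negP => ix.
have := mB _ ix (subsetUr _ _) => e.
by move: xB; rewrite -e setU11.
Qed.

Lemma rk_basis (B : {set T}) : indep M B -> rk setT <= #|B| -> is_basis M B.
Proof.
move=> iB le; split=> // X iX sBX; apply/eqP; rewrite eq_sym eqEcard sBX /=.
by apply: leq_trans le; apply: rk_ge.
Qed.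

Lemma basis_ex : exists B : {set T}, is_basis M B.
Proof.
have [J [_ _ iJ eJ]] := @rk_extend setT (rk setT) set0 (leq_subr _ _) (sub0set _) (indep0 M).
by exists J; apply: rk_basis => //; rewrite eJ.
Qed.

Lemma cocircuit_n0 (D : {set T}) : is_cocircuit M D -> D != set0.
Proof.
case=> nd _; apply/eqP => e; apply: nd; rewrite e.
by have [B hB] := basis_ex; exists B; split => //; apply: sub0set.
Qed.

Lemma closedD (D I : {set T}) e : is_cocircuit M D -> indep M I -> [disjoint I & D] ->
  e \in D -> indep M (e |: I).
Proof.
move=> [nd hD] iI dID eD.
have [B [hB sB]] := hD _ (properD1 eD).
have eB : e \in B.
  apply/negPn/negP => eB; apply: nd; exists B; split => //.
  apply/subsetP => x xD; case: (eqVneq x e) => [->|ne]; first by rewrite inE.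
  by apply: (subsetP sB); rewrite !inE ne xD.
set A := ~: D.
have sBA : B :\ e \subset A.
  apply/subsetP => x /setD1P[ne xB]; rewrite inE; apply/negP => xD.
  by move: (subsetP sB x); rewrite !inE ne xD xB => /(_ isT).
have cB : #|B| = (#|B :\ e|).+1 by rewrite (cardsD1 e B) eB.
have rkB := basis_rk hB.
have ltA : rk A < #|B|.
  rewrite ltnNge; apply/negP => le.
  have [J [sJA iJ eJ]] := rk_wit A.
  apply: nd; exists J; split; last first.
    by apply/subsetP => x xD; rewrite inE; apply/negP => xJ;
       move: (subsetP sJA x xJ); rewrite inE xD.
  by apply: rk_basis => //; rewrite eJ -rkB.
have leA : #|B :\ e| <= rk A by apply: rk_ge => //; apply: indep_subset (hB.1); apply: subD1set.
have sIA : I \subset A by rewrite /A subsetC -disjoints_subset disjoint_sym.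
have [J [sJA iJ eJ]] := rk_wit A.
have eJ' : indep M (e |: J).
  have [x /setDP[xB xJ] ix] := indep_aug iJ hB.1 ltac:(by rewrite eJ).
  case: (eqVneq x e) => [<-//|ne].
  have sxJ : x |: J \subset A.
    by rewrite subUset sJA sub1set andbT; apply: (subsetP sBA); rewrite !inE ne.
  by have := rk_ge sxJ ix; rewrite cardsU1 xJ eJ ltnn.
have eJn : e \notin J by apply/negP => /(subsetP sJA); rewrite inE eD.
have [I' [s1 s2 s3 s4]] := @rk_extend A (rk A) I (leq_subr _ _) sIA iI.
apply/negPn/negP => nI.
have lt' : #|I'| < #|e |: J| by rewrite cardsU1 eJn eJ s4.
have [x /setDP[xJ xI] ix] := indep_aug s3 eJ' lt'.
case: (eqVneq x e) => [exe|ne].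
  by move: nI; rewrite (indep_subset _ ix) // -exe setUS.
move: xJ; rewrite !inE (negbTE ne) /= => xJ.
have sxI : x |: I' \subset A by rewrite subUset s2 sub1set andbT (subsetP sJA).
by have := rk_ge sxI ix; rewrite cardsU1 xI s4 ltnn.
Qed.

End Rank.

Section Aux.
Variables (T : finType) (M : matroid T).

Lemma circ_dep (C : {set T}) : is_circuit M C -> ~~ indep M C.
Proof. by case/andP. Qed.

Lemma circ_proper (C D : {set T}) : is_circuit M C -> D \proper C -> indep M D.
Proof. by case/andP=> _ /forallP/(_ D)/implyP; apply. Qed.

Lemma subset_card (A : {set T}) n : n <= #|A| ->
  exists2 X : {set T}, X \subset A & #|X| = n.
Proof.
elim: n => [|n IH] h; first by exists set0; rewrite ?sub0set ?cards0.
have [X sXA cX] := IH (ltnW h).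
have : 0 < #|A :\: X| by rewrite cardsD (setIidPr sXA) cX subn_gt0.
case/card_gt0P => x /setDP[xA xX]; exists (x |: X).
  by rewrite subUset sub1set xA.
by rewrite cardsU1 xX cX.
Qed.

Lemma t_indep t (X : {set T}) : 0 < t -> t2t_property M t -> #|X| = t -> indep M X.
Proof.
move=> t0 ht cX; have [[C [cC cardC sXC]] _] := ht X cX.
apply: circ_proper cC _; rewrite properEcard sXC cardC cX; lia.
Qed.

Lemma rk_drop (A D : {set T}) x : is_cocircuit M D -> x \in A -> x \in D ->
  (rk M (A :\: D)).+1 <= rk M A.
Proof.
move=> hD xA xD; have [I [sI iI eI]] := rk_wit M (A :\: D).
have dI : [disjoint I & D].
  by rewrite disjoint_subset; apply: subset_trans sI _; apply/subsetP => z; rewrite !inE => /andP[].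
have ix := closedD hD iI dI xD.
have xI : x \notin I by apply/negP => /(subsetP sI); rewrite inE xD.
have sx : x |: I \subset A.
  rewrite subUset sub1set xA /=; apply: subset_trans sI _; apply: subsetDl.
by have := rk_ge sx ix; rewrite cardsU1 xI eI.
Qed.

Lemma bigcup_seqP' (I : eqType) (F : I -> {set T}) (s : seq I) x :
  x \in \bigcup_(i <- s) F i -> exists2 i, i \in s & x \in F i.
Proof.
elim: s => [|i s IH]; first by rewrite big_nil inE.
rewrite big_cons inE => /orP[xi|/IH[k ks xk]]; first by exists i; rewrite ?inE ?eqxx.
by exists k; rewrite // inE ks orbT.
Qed.

Lemma rk_chain (I : eqType) (Cs : I -> {set T}) (N : {set T}) :
  (forall i, is_cocircuit M (Cs i)) ->
  (forall i j, i != j -> [disjoint Cs i & Cs j]) ->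
  (forall i, exists2 x, x \in N & x \in Cs i) ->
  forall s : seq I, uniq s ->
  rk M (N :\: \bigcup_(i <- s) Cs i) + size s <= rk M N.
Proof.
move=> hC hdis hN; elim=> [|i s IH] /=.
  by rewrite big_nil setD0 addn0.
case/andP=> iS us; rewrite big_cons setUC -setDDl.
have [x xN xi] := hN i.
have xU : x \notin \bigcup_(k <- s) Cs k.
  apply/negP => /bigcup_seqP'[k ks xk].
  have ne : i != k by apply/negP => /eqP e; move: iS; rewrite e ks.
  by move: (disjointFr (hdis _ _ ne) xi); rewrite xk.
have h2 : x \in N :\: \bigcup_(k <- s) Cs k by rewrite inE xU xN.
move: (rk_drop (hC i) h2 xi) (IH us); lia.
Qed.

Lemma card_bigcup_disj (I : eqType) (F : I -> {set T}) (s : seq I) :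
  uniq s -> (forall i j, i != j -> [disjoint F i & F j]) ->
  #|\bigcup_(i <- s) F i| = \sum_(i <- s) #|F i|.
Proof.
move=> us hdis; elim: s us => [|i s IH] /=; first by rewrite !big_nil cards0.
case/andP=> iS us; rewrite !big_cons cardsU -IH //.
suff -> : F i :&: \bigcup_(k <- s) F k = set0 by rewrite cards0 subn0.
apply/setP => x; rewrite !inE; apply/negP => /andP[xi /bigcup_seqP'[k ks xk]].
have ne : i != k by apply/negP => /eqP e; move: iS; rewrite e ks.
by move: (disjointFr (hdis _ _ ne) xi); rewrite xk.
Qed.

Lemma bigcup_ord_enum n (F : 'I_n -> {set T}) :
  \bigcup_(i < n) F i = \bigcup_(i <- enum 'I_n) F i.
Proof. by rewrite big_enum. Qed.

Lemma sum_ord_enum n (F : 'I_n -> nat) :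
  \sum_(i < n) F i = \sum_(i <- enum 'I_n) F i.
Proof. by rewrite big_enum. Qed.

End Aux.

Lemma ar1 t a b c : 0 < t -> a.+1 <= b -> c <= a -> t <= c -> b + t.-1 <= 2*t-1 -> False.
Proof. lia. Qed.
Lemma ar2 t a b c : a + b = c -> a <= 2*t-1 -> b <= t-1 -> c <= 3*t-1.
Proof. lia. Qed.

Theorem lemma5p3 (T : finType) (M : matroid T) (t : nat)
  (Cs : 'I_t.-1 -> {set T}) :
  0 < t ->
  t2t_property M t ->
  (forall i, is_cocircuit M (Cs i)) ->
  (forall i j, i != j -> [disjoint Cs i & Cs j]) ->
  let Y := ~: \bigcup_(i < t.-1) Cs i in
  (forall y, y \in Y ->
     exists C : {set T},
       [/\ is_circuit M C, #|C| = 2 * t, y \in C &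
        (forall i, #|C :&: Cs i| = 2) \/
        (exists j, #|C :&: Cs j| = 3 /\
           forall i, i != j -> #|C :&: Cs i| = 2)]) /\
  (forall (S : {set T}) (y : T),
     y \in Y -> y \notin S ->
     is_circuit M (y |: S) -> #|y |: S| = 2 * t ->
     (exists j, #|(y |: S) :&: Cs j| = 3 /\
        forall i, i != j -> #|(y |: S) :&: Cs i| = 2) ->
     #|[set w in Y | is_circuit M (w |: S)]| <= 3 * t - 1).
Proof.
move=> t0 ht hC hdis Y.
have notU : forall z i, z \in Y -> z \in Cs i -> False.
  move=> z i; rewrite /Y inE => /negP zU zi; apply: zU.
  by apply/bigcupP; exists i.
split.
- move=> y yY.
  pose c i := odflt y [pick x in Cs i].
  have ci i : c i \in Cs i.
    rewrite /c; case: pickP => [x //|/= h].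
    by case/set0Pn: (cocircuit_n0 (hC i)) => x; rewrite h.
  have cinj : injective c.
    move=> i j e; apply/eqP/negPn/negP => ne.
    by move: (disjointFr (hdis _ _ ne) (ci i)); rewrite e ci.
  set X := y |: (c @: [set: 'I_t.-1]).
  have yX : y \notin c @: [set: 'I_t.-1].
    by apply/negP => /imsetP[i _ e]; apply: (notU y i yY); rewrite e ci.
  have cX : #|X| = t by rewrite cardsU1 yX card_imset // cardsT card_ord add1n prednK.
  have [[C [cC cardC sXC]] _] := ht X cX.
  have f2 i : 2 <= #|C :&: Cs i|.
    have ciC : c i \in C :&: Cs i.
      by rewrite inE ci andbT (subsetP sXC) // setU1r // imset_f.
    rewrite ltnNge; apply/negP => le1.
    have e1 : #|C :&: Cs i| == 1.
      by rewrite eqn_leq le1 /=; apply/card_gt0P; exists (c i).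
    case/cards1P: e1 => z ez.
    have ez' : C :&: Cs i = [set c i] by move: ciC; rewrite ez inE => /eqP ->.
    have ciC' : c i \in C by move: ciC; rewrite inE => /andP[].
    have iI : indep M (C :\ c i) by apply: circ_proper cC (properD1 ciC').
    have dI : [disjoint C :\ c i & Cs i].
      rewrite -setI_eq0; apply/eqP/setP => w; rewrite !inE.
      apply/negP => /andP[/andP[ne wC] wi].
      have : w \in C :&: Cs i by rewrite inE wC wi.
      by rewrite ez' inE (negbTE ne).
    have := closedD (hC i) iI dI (ci i); rewrite setD1K //.
    by move/negP: (circ_dep cC).
  have hsum : \sum_(i < t.-1) #|C :&: Cs i| <= 2 * t - 1.
    rewrite sum_ord_enum -card_bigcup_disj ?enum_uniq //; last first.
      move=> i j ne; apply: disjointWl (subsetIr _ _) _.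
      by apply: disjointWr (subsetIr _ _) _; apply: hdis.
    have yC : y \in C by rewrite (subsetP sXC) // setU11.
    have -> : 2 * t - 1 = #|C :\ y| by move: (cardsD1 y C); rewrite yC cardC; lia.
    apply: subset_leq_card; apply/subsetP => z /bigcup_seqP'[i _].
    rewrite !inE => /andP[zC zi]; rewrite zC andbT.
    by apply/negP => /eqP e; apply: (notU y i yY); rewrite -e.
  exists C; split => //; first by rewrite (subsetP sXC) // setU11.
  pose g i := #|C :&: Cs i| - 2.
  have hg : \sum_(i < t.-1) g i <= 1.
    have e : \sum_(i < t.-1) #|C :&: Cs i| = \sum_(i < t.-1) g i + (t.-1) * 2.
      have hc : \sum_(i < t.-1) 2 = t.-1 * 2 by rewrite sum_nat_const card_ord.
      rewrite -hc -big_split /=.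
      by apply: eq_bigr => i _; rewrite /g subnK.
    move: hsum; rewrite e; lia.
  case: (boolP [forall i, #|C :&: Cs i| == 2]) => [/forallP h|/forallPn [j hj]].
    by left => i; apply/eqP.
  right; exists j.
  have gj : 1 <= g j by move: hj (f2 j); rewrite /g; lia.
  move: hg; rewrite (bigD1 j) //= => hg.
  split; first by move: gj hg hj (f2 j); rewrite /g; lia.
  move=> i ne; move: hg; rewrite (bigD1 i) //= => hg.
  by move: gj hg (f2 i); rewrite /g; lia.
- move=> S y yY yS cyS cardyS [j [hj hother]].
  set W := [set w in Y | is_circuit M (w |: S)].
  have iS : indep M S.
    by apply: circ_proper cyS _; rewrite -{1}(setU1K yS); apply: properD1; rewrite setU11.
  have cS : #|S| = 2 * t - 1 by move: cardyS; rewrite cardsU1 yS; lia.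
  have hSi i : exists2 x, x \in S :|: W & x \in Cs i.
    have : 0 < #|(y |: S) :&: Cs i|.
      by case: (eqVneq i j) => [->|ne]; [rewrite hj | rewrite hother].
    case/card_gt0P => x; rewrite !inE => /andP[/orP[/eqP exy|xS] xi].
      by exfalso; apply: (notU y i yY); rewrite -exy.
    by exists x; rewrite // inE xS.
  have WS w : w \in W -> w \notin S.
    rewrite inE => /andP[_ cw]; apply/negP => wS.
    by move: (circ_dep cw); rewrite (setUidPr _) ?sub1set // iS.
  have rkN : #|S| = rk M (S :|: W).
    apply: rk_max => //; first exact: subsetUl.
    move=> x; rewrite inE => /orP[->//|xW] _.
    by move: xW; rewrite inE => /andP[_ /circ_dep].
  case: (leqP t #|W|) => hW; last by lia.
  have [X sXW cX] := subset_card hW.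
  have [_ [D [cD cardD sXD]]] := ht X cX.
  have [x0 x0X] : exists x0 : T, x0 \in X by apply/card_gt0P; rewrite cX.
  have x0W : x0 \in W by apply: (subsetP sXW).
  have x0D : x0 \in D by apply: (subsetP sXD).
  have [s0 s0S s0D] : exists2 s0, s0 \in S & s0 \in D.
    case: (boolP [disjoint S & D]) => [dj|].
      move: x0W; rewrite inE => /andP[_ /circ_dep].
      by rewrite (closedD cD iS dj x0D).
    by rewrite -setI_eq0 => /set0Pn[s0]; rewrite inE => /andP[a b]; exists s0.
  have h1 : #|W :&: D| <= 2 * t - 1.
    have -> : 2 * t - 1 = #|D :\ s0| by move: (cardsD1 s0 D); rewrite s0D cardD; lia.
    apply: subset_leq_card; apply/subsetP => z /setIP[zW zD].
    rewrite !inE zD andbT; apply/negP => /eqP e.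
    by move: (WS z zW); rewrite e s0S.
  have h2 : #|W :\: D| <= t - 1.
    rewrite leqNgt; apply/negP => lt.
    have ltD : t <= #|W :\: D| by lia.
    have [Z sZ cZ] := subset_card ltD.
    have iZ := t_indep t0 ht cZ.
    set U := \bigcup_(i < t.-1) Cs i.
    have sub : W :\: D \subset (S :|: W) :\: U :\: D.
      apply/subsetP => z /setDP[zW zD].
      rewrite inE zD /= inE (subsetP (subsetUr S W)) // andbT.
      by move: zW; rewrite inE => /andP[]; rewrite /Y inE.
    have ch := rk_chain hC hdis hSi (enum_uniq 'I_t.-1).
    rewrite -bigcup_ord_enum size_enum_ord -/U in ch.
    have x0NU : x0 \in (S :|: W) :\: U.
      rewrite inE (subsetP (subsetUr S W)) // andbT.
      by move: x0W; rewrite !inE => /andP[].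
    have dr := rk_drop cD x0NU x0D.
    have mo := rk_mono M sub.
    have ge := rk_ge sZ iZ.
    rewrite cZ in ge; rewrite -rkN cS in ch; exact: ar1 t0 dr mo ge ch.
  exact: ar2 (cardsID D W) h1 h2.
Qed.
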